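(* Let $a_1,b_1>0$ and $\alpha>0$ with $\alpha\neq 1$, and set $a_2=\alpha a_1$, $b_2=\alpha b_1$ (so that $p_2=\alpha p_1$). Then, with $C_1,C_2$ as defined in the context, $\sup_{\omega\ge0}|C_1(j\omega)C_2(j\omega)|<1$.
   Context: For constants $a_1,b_1,a_2,b_2>0$ and complex $s$, set $p_1(s)=a_1+b_1 s$, $p_2(s)=a_2+b_2 s$, $q=p_1+p_2$, and $m(s)=(s^2+q)\sqrt{1-\frac{4p_1p_2}{(s^2+q)^2}}$ with $\sqrt{\cdot}$ the principal complex square root (nonnegative real part), so $m^2=(s^2+q)^2-4p_1p_2$. Define $C_1=\frac{(s^2+q)-m}{2p_2}$ and $C_2=\frac{(s^2+q)-m}{2p_1}$. $j$ denotes the imaginary unit. *)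

(* Defs.v *)
From Stdlib Require Import Reals Lra.
Open Scope R_scope.

Record Cplx := mkC { Re : R ; Im : R }.

Definition Cadd (z w : Cplx) : Cplx := mkC (Re z + Re w) (Im z + Im w).
Definition Csub (z w : Cplx) : Cplx := mkC (Re z - Re w) (Im z - Im w).
Definition Cmul (z w : Cplx) : Cplx :=
  mkC (Re z * Re w - Im z * Im w) (Re z * Im w + Im z * Re w).
(* inverse; Cinv 0 = 0 by the Stdlib convention /0 *)
Definition Cinv (z : Cplx) : Cplx :=
  let d := Re z * Re z + Im z * Im z in mkC (Re z / d) (- Im z / d).
Definition Cdiv (z w : Cplx) : Cplx := Cmul z (Cinv w).
Definition RtoC (x : R) : Cplx := mkC x 0.
Definition Cnorm (z : Cplx) : R := sqrt (Re z * Re z + Im z * Im z).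

(* principal square root: nonnegative real part; on the negative real axis
   (real part 0) the root with positive imaginary part, i.e. arg in (-pi/2, pi/2]. *)
Definition Csqrt (z : Cplx) : Cplx :=
  let r := Cnorm z in
  mkC (sqrt ((r + Re z) / 2))
      (if Rlt_dec (Im z) 0 then - sqrt ((r - Re z) / 2) else sqrt ((r - Re z) / 2)).

Definition Cj : Cplx := mkC 0 1.

Section Defs.
Variables a1 b1 a2 b2 : R.

Definition p1 (s : Cplx) : Cplx := Cadd (RtoC a1) (Cmul (RtoC b1) s).
Definition p2 (s : Cplx) : Cplx := Cadd (RtoC a2) (Cmul (RtoC b2) s).
Definition q (s : Cplx) : Cplx := Cadd (p1 s) (p2 s).

Definition mfun (s : Cplx) : Cplx :=
  let t := Cadd (Cmul s s) (q s) in
  Cmul t (Csqrt (Csub (RtoC 1)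
                      (Cdiv (Cmul (RtoC 4) (Cmul (p1 s) (p2 s))) (Cmul t t)))).

Definition C_1 (s : Cplx) : Cplx :=
  Cdiv (Csub (Cadd (Cmul s s) (q s)) (mfun s)) (Cmul (RtoC 2) (p2 s)).
Definition C_2 (s : Cplx) : Cplx :=
  Cdiv (Csub (Cadd (Cmul s s) (q s)) (mfun s)) (Cmul (RtoC 2) (p1 s)).
End Defs.

(* Main.v *)
Require Import Defs.
From Stdlib Require Import Reals Lra Psatz.
Local Open Scope R_scope.

Definition ns (z : Cplx) : R := Re z * Re z + Im z * Im z.
Lemma ns_ge0 z : 0 <= ns z. Proof. unfold ns; nra. Qed.
Lemma ns_mul a b : ns (Cmul a b) = ns a * ns b.
Proof. unfold ns; destruct a, b; simpl; ring. Qed.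
Lemma ns_inv w : ns w <> 0 -> ns (Cinv w) = / ns w.
Proof. unfold ns, Cinv; destruct w; simpl; intros; field; auto. Qed.
Lemma Ceq z w : Re z = Re w -> Im z = Im w -> z = w.
Proof. destruct z, w; simpl; intros; subst; auto. Qed.

Lemma Csqrt_sq z : Cmul (Csqrt z) (Csqrt z) = z.
Proof.
  destruct z as [zr zi]. unfold Csqrt, Cnorm; simpl.
  set (n := sqrt (zr*zr+zi*zi)).
  assert (Hn2 : n*n = zr*zr+zi*zi) by (unfold n; apply sqrt_sqrt; nra).
  assert (Hn0 : 0 <= n) by (unfold n; apply sqrt_pos).
  assert (HA : 0 <= (n+zr)/2) by nra.
  assert (HB : 0 <= (n-zr)/2) by nra.
  assert (Hx := sqrt_sqrt _ HA). assert (Hy := sqrt_sqrt _ HB).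
  assert (P0 : 0 <= sqrt ((n+zr)/2) * sqrt ((n-zr)/2)) by (apply Rmult_le_pos; apply sqrt_pos).
  set (x := sqrt ((n+zr)/2)) in *. set (y := sqrt ((n-zr)/2)) in *.
  assert (P2 : (x*y)*(x*y) = zi*zi/4).
  { replace ((x*y)*(x*y)) with ((x*x)*(y*y)) by ring. rewrite Hx, Hy. nra. }
  destruct (Rlt_dec zi 0); apply Ceq; simpl.
  - nra.
  - nra.
  - nra.
  - nra.
Qed.

Lemma ns_RtoC c : ns (RtoC c) = c*c. Proof. unfold ns; simpl; ring. Qed.

Lemma Csqrt_re_ge0 z : 0 <= Re (Csqrt z). Proof. unfold Csqrt; simpl; apply sqrt_pos. Qed.

Lemma Csqrt_ns z : ns (Csqrt z) = Cnorm z.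
Proof.
  destruct z as [zr zi]. unfold ns, Csqrt, Cnorm; simpl.
  set (n := sqrt (zr*zr+zi*zi)).
  assert (Hn2 : n*n = zr*zr+zi*zi) by (unfold n; apply sqrt_sqrt; nra).
  assert (Hn0 : 0 <= n) by (unfold n; apply sqrt_pos).
  assert (HA : 0 <= (n+zr)/2) by nra.
  assert (HB : 0 <= (n-zr)/2) by nra.
  assert (Hx := sqrt_sqrt _ HA). assert (Hy := sqrt_sqrt _ HB).
  destruct (Rlt_dec zi 0); nra.
Qed.

Lemma gen t P1 P2 : ns t <> 0 -> ns P1 <> 0 -> ns P2 <> 0 ->
 ns (Cmul (Cdiv (Csub t (Cmul t (Csqrt (Csub (RtoC 1) (Cdiv (Cmul (RtoC 4) (Cmul P1 P2)) (Cmul t t))))))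
                (Cmul (RtoC 2) P2))
          (Cdiv (Csub t (Cmul t (Csqrt (Csub (RtoC 1) (Cdiv (Cmul (RtoC 4) (Cmul P1 P2)) (Cmul t t))))))
                (Cmul (RtoC 2) P1)))
 = ns (Csub (RtoC 1) (Csqrt (Csub (RtoC 1) (Cdiv (Cmul (RtoC 4) (Cmul P1 P2)) (Cmul t t)))))
   / ns (Cadd (RtoC 1) (Csqrt (Csub (RtoC 1) (Cdiv (Cmul (RtoC 4) (Cmul P1 P2)) (Cmul t t))))).
Proof.
  intros Ht H1 H2.
  set (D := Cmul (RtoC 4) (Cmul P1 P2)).
  set (z := Csub (RtoC 1) (Cdiv D (Cmul t t))).
  set (u := Csqrt z).
  assert (Huu : Cmul u u = z) by apply Csqrt_sq.
  assert (Hu0 : 0 <= Re u) by exact (Csqrt_re_ge0 z).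
  clearbody u.
  assert (HT2 : ns (Cmul t t) <> 0) by (rewrite ns_mul; intro; apply Ht; nra).
  assert (HD : D = Cmul (Cmul t t) (Cmul (Csub (RtoC 1) u) (Cadd (RtoC 1) u))).
  { assert (E : Cmul (Csub (RtoC 1) u) (Cadd (RtoC 1) u) = Csub (RtoC 1) z).
    { rewrite <- Huu. destruct u; apply Ceq; simpl; ring. }
    rewrite E. unfold z. clear E Huu Hu0 u.
    unfold ns in HT2. destruct D as [dr di], t as [tr ti]; unfold Cdiv, Cinv; apply Ceq; simpl in *;
    field; auto. }
  assert (HnsD : ns D = ns t * ns t * (ns (Csub (RtoC 1) u) * ns (Cadd (RtoC 1) u))).
  { rewrite HD, !ns_mul. ring. }
  assert (HnsD2 : ns D = 16 * ns P1 * ns P2).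
  { unfold D; rewrite !ns_mul, ns_RtoC; ring. }
  assert (Hsub : Csub t (Cmul t u) = Cmul t (Csub (RtoC 1) u)).
  { destruct t, u; apply Ceq; simpl; ring. }
  rewrite Hsub. unfold Cdiv. rewrite !ns_mul, !ns_inv, !ns_mul, !ns_RtoC.
  2,3: rewrite ns_mul, ns_RtoC; intro; nra.
  assert (Hp : 0 < ns (Cadd (RtoC 1) u)).
  { destruct u as [ur ui]; unfold ns; simpl in *. nra. }
  assert (Hq : ns t * ns t <> 0) by (intro; apply Ht; nra).
  assert (0 < ns P1) by (pose proof (ns_ge0 P1); lra).
  assert (0 < ns P2) by (pose proof (ns_ge0 P2); lra).
  apply (Rmult_eq_reg_r (ns D)). 2: rewrite HnsD2; nra.
  rewrite HnsD at 2. rewrite HnsD2 at 1. field; lra.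
Qed.

Lemma cont_plus f g x : continuity_pt f x -> continuity_pt g x -> continuity_pt (fun w => f w + g w) x.
Proof. intros; apply (continuity_pt_plus f g); auto. Qed.
Lemma cont_minus f g x : continuity_pt f x -> continuity_pt g x -> continuity_pt (fun w => f w - g w) x.
Proof. intros; apply (continuity_pt_minus f g); auto. Qed.
Lemma cont_mult f g x : continuity_pt f x -> continuity_pt g x -> continuity_pt (fun w => f w * g w) x.
Proof. intros; apply (continuity_pt_mult f g); auto. Qed.
Lemma cont_opp f x : continuity_pt f x -> continuity_pt (fun w => - f w) x.
Proof. intros; apply (continuity_pt_opp f); auto. Qed.
Lemma cont_div f g x : continuity_pt f x -> continuity_pt g x -> g x <> 0 -> continuity_pt (fun w => f w / g w) x.
Proof. intros; apply (continuity_pt_div f g); auto. Qed.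
Lemma cont_const c x : continuity_pt (fun _ => c) x.
Proof. apply continuity_pt_const; intros ? ?; reflexivity. Qed.
Lemma cont_id x : continuity_pt (fun w => w) x.
Proof. apply derivable_continuous_pt; apply derivable_pt_id. Qed.
Lemma cont_sqrt f x : continuity_pt f x -> 0 <= f x -> continuity_pt (fun w => sqrt (f w)) x.
Proof. intros; apply (continuity_pt_comp f sqrt); auto; apply continuity_pt_sqrt; auto. Qed.

Definition Ccont (f : R -> Cplx) x :=
  continuity_pt (fun w => Re (f w)) x /\ continuity_pt (fun w => Im (f w)) x.

Lemma Ccont_add f g x : Ccont f x -> Ccont g x -> Ccont (fun w => Cadd (f w) (g w)) x.
Proof. intros [] []; split; simpl; apply cont_plus; auto. Qed.
Lemma Ccont_sub f g x : Ccont f x -> Ccont g x -> Ccont (fun w => Csub (f w) (g w)) x.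
Proof. intros [] []; split; simpl; apply cont_minus; auto. Qed.
Lemma Ccont_mul f g x : Ccont f x -> Ccont g x -> Ccont (fun w => Cmul (f w) (g w)) x.
Proof. intros [] []; split; simpl; first [apply cont_minus | apply cont_plus]; apply cont_mult; auto. Qed.
Lemma Ccont_const c x : Ccont (fun _ => c) x.
Proof. split; apply cont_const. Qed.
Lemma Ccont_RtoC x : Ccont (fun w => RtoC w) x.
Proof. split; simpl; [apply cont_id | apply cont_const]. Qed.
Lemma Ccont_inv f x : Ccont f x -> ns (f x) <> 0 -> Ccont (fun w => Cinv (f w)) x.
Proof.
  intros [] Hn; unfold ns in Hn; split; unfold Cinv; simpl; apply cont_div; auto;
  try apply cont_opp; auto; apply cont_plus; apply cont_mult; auto.
Qed.
Lemma Ccont_div f g x : Ccont f x -> Ccont g x -> ns (g x) <> 0 -> Ccont (fun w => Cdiv (f w) (g w)) x.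
Proof. intros; unfold Cdiv; apply Ccont_mul; auto; apply Ccont_inv; auto. Qed.

Lemma Cnorm_ns z : Cnorm z = sqrt (ns z). Proof. reflexivity. Qed.

Lemma Cnorm_ge z : 0 <= Cnorm z /\ Cnorm z * Cnorm z = Re z * Re z + Im z * Im z.
Proof. unfold Cnorm; split; [apply sqrt_pos| apply sqrt_sqrt; nra]. Qed.

Lemma ratio_bound z d : 0 < d <= 1/3 -> d * (1 + Cnorm z) <= 2 * Re (Csqrt z) ->
  sqrt (ns (Csub (RtoC 1) (Csqrt z)) / ns (Cadd (RtoC 1) (Csqrt z))) <= sqrt ((1-d)/(1+d)).
Proof.
  intros Hd H. apply sqrt_le_1_alt.
  assert (Hn := Csqrt_ns z). assert (Hx := Csqrt_re_ge0 z).
  assert (Hn0 := proj1 (Cnorm_ge z)).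
  destruct (Csqrt z) as [x y]. unfold ns in *; simpl in *.
  set (A := (1 - x) * (1 - x) + (0 - y) * (0 - y)).
  set (B := (1 + x) * (1 + x) + (0 + y) * (0 + y)).
  assert (HB : 0 < B) by (unfold B; nra).
  assert (E1 : A / B = (A*(1+d)) * / (B*(1+d))) by (field; lra).
  assert (E2 : (1-d)/(1+d) = ((1-d)*B) * / (B*(1+d))) by (field; lra).
  rewrite E1, E2. apply Rmult_le_compat_r. left; apply Rinv_0_lt_compat; nra.
  unfold A, B.
  nra.
Qed.

Definition sw w := Cmul Cj (RtoC w).
Definition tw a b al w := Cadd (Cmul (sw w) (sw w)) (q a b (al*a) (al*b) (sw w)).
Definition Dw a b al w := Cmul (RtoC 4) (Cmul (p1 a b (sw w)) (p2 (al*a) (al*b) (sw w))).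
Definition zw a b al w := Csub (RtoC 1) (Cdiv (Dw a b al w) (Cmul (tw a b al w) (tw a b al w))).

Lemma tw_re a b al w : Re (tw a b al w) = - (w*w) + (1+al)*a.
Proof. unfold tw, sw, q, p1, p2; simpl; ring. Qed.
Lemma tw_im a b al w : Im (tw a b al w) = (1+al)*b*w.
Proof. unfold tw, sw, q, p1, p2; simpl; ring. Qed.
Lemma Dw_re a b al w : Re (Dw a b al w) = 4*al*(a*a - b*b*w*w).
Proof. unfold Dw, sw, p1, p2; simpl; ring. Qed.
Lemma Dw_im a b al w : Im (Dw a b al w) = 8*al*a*b*w.
Proof. unfold Dw, sw, p1, p2; simpl; ring. Qed.
Lemma ns_p1 a b w : ns (p1 a b (sw w)) = a*a + b*b*w*w.
Proof. unfold ns, sw, p1; simpl; ring. Qed.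
Lemma ns_p2 a b al w : ns (p2 (al*a) (al*b) (sw w)) = al*al*(a*a + b*b*w*w).
Proof. unfold ns, sw, p2; simpl; ring. Qed.

Lemma ns_tw_pos a b al w : 0 < a -> 0 < b -> 0 < al -> 0 < ns (tw a b al w).
Proof.
  intros. unfold ns; rewrite tw_re, tw_im.
  destruct (Req_dec w 0) as [->|Hw].
  - nra.
  - assert (0 < ((1+al)*b*w) * ((1+al)*b*w)).
    { assert ((1+al)*b*w <> 0). { repeat apply Rmult_integral_contrapositive_currified; lra. }
      nra. }
    apply Rplus_le_lt_0_compat; [apply Rle_0_sqr|exact H2].
Qed.

Lemma Ccont_zw a b al x : 0 < a -> 0 < b -> 0 < al -> Ccont (zw a b al) x.
Proof.
  intros Ha Hb Hal.
  assert (Hs : Ccont sw x) by (unfold sw; apply (Ccont_mul (fun _ => Cj)); [apply Ccont_const|apply Ccont_RtoC]).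
  assert (HP1 : Ccont (fun w => p1 a b (sw w)) x).
  { unfold p1. apply (Ccont_add (fun _ => _)). apply Ccont_const.
    apply (Ccont_mul (fun _ => _)); [apply Ccont_const| exact Hs]. }
  assert (HP2 : Ccont (fun w => p2 (al*a) (al*b) (sw w)) x).
  { unfold p2. apply (Ccont_add (fun _ => _)). apply Ccont_const.
    apply (Ccont_mul (fun _ => _)); [apply Ccont_const| exact Hs]. }
  assert (Ht : Ccont (tw a b al) x).
  { unfold tw. apply Ccont_add. apply Ccont_mul; auto. unfold q.
    apply Ccont_add; auto. }
  unfold zw. apply (Ccont_sub (fun _ => _)). apply Ccont_const.
  apply Ccont_div. unfold Dw. apply (Ccont_mul (fun _ => _)). apply Ccont_const.
  apply Ccont_mul; auto. apply Ccont_mul; auto.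
  rewrite ns_mul. pose proof (ns_tw_pos a b al x Ha Hb Hal). nra.
Qed.

Lemma recover T D : ns T <> 0 -> Cmul T (Csub (RtoC 1) (Csub (RtoC 1) (Cdiv D T))) = D.
Proof. destruct T, D; unfold ns; simpl; intros; unfold Cdiv, Cinv; apply Ceq; simpl; field; auto. Qed.

Lemma key_contra a b al w k : 0 < a -> 0 < b -> 0 < al -> al <> 1 -> 0 <= w -> 1 <= k ->
  4*al*(a*a - b*b*w*w) = (( - (w*w) + (1+al)*a) * ( - (w*w) + (1+al)*a) - ((1+al)*b*w) * ((1+al)*b*w)) * k ->
  8*al*a*b*w = (( - (w*w) + (1+al)*a) * ((1+al)*b*w) + ((1+al)*b*w) * ( - (w*w) + (1+al)*a)) * k ->
  False.
Proof.
  intros Ha Hb Hal H1 Hw Hk Er Ei.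
  assert (Hc : 0 < k*(1+al)*(1+al) - 4*al).
  { assert (0 < (1-al)*(1-al)). { assert (1 - al <> 0) by lra. apply Rsqr_pos_lt; auto. }
    nra. }
  set (tr := - (w*w) + (1+al)*a) in *.
  destruct (Req_dec w 0) as [->|Hw0].
  - assert (tr = (1+al)*a) by (unfold tr; ring).
    rewrite H in Er. assert (0 < a*a) by nra.
    assert (a*a*(4*al - k*(1+al)*(1+al)) = 0) by (ring_simplify in Er; nra).
    apply Rmult_integral in H2. destruct H2; nra.
  - assert (Hbw : 0 < b*w) by (apply Rmult_lt_0_compat; lra).
    assert (Ei2 : 4*al*a = k*(1+al)*tr).
    { apply (Rmult_eq_reg_r (2*b*w)). 2: nra. nra. }
    assert (Er2 : 4*al*a*a - k*tr*tr = - (k*(1+al)*(1+al) - 4*al)*(b*w)*(b*w)).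
    { assert (X : (4*al*a*a - k*tr*tr) - (- (k*(1+al)*(1+al) - 4*al)*(b*w)*(b*w)) =
        4*al*(a*a - b*b*w*w) - (tr * tr - ((1+al)*b*w) * ((1+al)*b*w)) * k) by ring.
      lra. }
    assert (E3 : (4*al*a*a - k*tr*tr)*(k*(1+al)*(1+al)) = 4*al*a*a*(k*(1+al)*(1+al) - 4*al)).
    { replace ((4*al*a*a - k*tr*tr)*(k*(1+al)*(1+al))) with (4*al*a*a*(k*(1+al)*(1+al)) - (k*(1+al)*tr)*(k*(1+al)*tr)) by ring.
      rewrite <- Ei2. ring. }
    rewrite Er2 in E3.
    assert (0 < 4*al*a*a*(k*(1+al)*(1+al) - 4*al)).
    { apply Rmult_lt_0_compat; auto. assert (0 < 4*al*a) by nra. nra. }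
    assert (0 < k*(1+al)*(1+al)) by (assert (0 < (1+al)*(1+al)) by nra; nra).
    assert (0 < (k*(1+al)*(1+al) - 4*al)*(b*w)*(b*w)*(k*(1+al)*(1+al))).
    { apply Rmult_lt_0_compat; auto. apply Rmult_lt_0_compat; auto. nra. }
    nra.
Qed.

Lemma pos_pt a b al w : 0 < a -> 0 < b -> 0 < al -> al <> 1 -> 0 <= w ->
  0 < Cnorm (zw a b al w) + Re (zw a b al w).
Proof.
  intros Ha Hb Hal H1 Hw.
  destruct (Cnorm_ge (zw a b al w)) as [Hn0 Hn2].
  assert (HT : ns (Cmul (tw a b al w) (tw a b al w)) <> 0).
  { rewrite ns_mul. pose proof (ns_tw_pos a b al w Ha Hb Hal). nra. }
  assert (HD := recover _ (Dw a b al w) HT). fold (zw a b al w) in HD.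
  set (z := zw a b al w) in *. clearbody z.
  destruct (Rle_or_lt (Cnorm z + Re z) 0) as [Hle|]; auto. exfalso.
  assert (Hzi : Im z * Im z = 0) by nra.
  assert (Hzi0 : Im z = 0) by (apply Rmult_integral in Hzi; destruct Hzi; auto).
  assert (Hzr : Re z <= 0) by nra.
  assert (ER := f_equal Re HD). assert (EI := f_equal Im HD).
  cbn [Re Im Cmul Csub RtoC] in ER, EI.
  rewrite Hzi0, tw_re, tw_im, Dw_re in ER. rewrite Hzi0, tw_re, tw_im, Dw_im in EI.
  apply (key_contra a b al w (1 - Re z)); auto; try lra.
Qed.

Definition Gf a b al w := 2 * sqrt ((Cnorm (zw a b al w) + Re (zw a b al w))/2) / (1 + Cnorm (zw a b al w)).

Lemma Gf_cont a b al x : 0 < a -> 0 < b -> 0 < al -> continuity_pt (Gf a b al) x.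
Proof.
  intros Ha Hb Hal. destruct (Ccont_zw a b al x Ha Hb Hal) as [Cr Ci].
  assert (Cn : continuity_pt (fun w => Cnorm (zw a b al w)) x).
  { unfold Cnorm. apply cont_sqrt. apply cont_plus; apply cont_mult; auto.
    cbv beta. nra. }
  unfold Gf. apply cont_div. apply cont_mult. apply cont_const.
  apply cont_sqrt. apply cont_div. apply cont_plus; auto. apply cont_const. lra.
  cbv beta. destruct (Cnorm_ge (zw a b al x)). nra.
  apply cont_plus; auto. apply cont_const.
  cbv beta. destruct (Cnorm_ge (zw a b al x)). lra.
Qed.

Lemma large a b al w : 0 < a -> 0 < b -> 0 < al ->
  2*(1+al)*a + 64*al*(b*b) + 8*a*(1+al) + 1 <= w -> 1/3 <= Gf a b al w.
Proof.
  intros Ha Hb Hal Hw.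
  set (s := w*w).
  assert (Hs : 2*(1+al)*a + 64*al*(b*b) + 8*a*(1+al) <= s).
  { unfold s. assert (0 <= al*(b*b)) by nra. nra. }
  assert (Hnt : 8*al*(a*a + b*b*s) <= ns (tw a b al w)).
  { unfold ns. rewrite tw_re, tw_im. fold s.
    set (c := (1+al)*a).
    assert (Hc : 0 < c) by (unfold c; nra).
    assert (H1 : s*s/4 <= (-s + c)*(-s + c)).
    { assert (s/2 <= s - c) by (assert (0 <= al*(b*b)) by nra; unfold c in *; nra). assert (0 <= s/2) by lra.
      replace ((-s+c)*(-s+c)) with ((s-c)*(s-c)) by ring. nra. }
    assert (H2 : 8*al*(b*b)*s <= s*s/8).
    { assert (0 <= s) by (unfold s; nra). assert (64*al*(b*b) <= s) by (assert (0 <= al*(b*b)) by nra; nra). nra. }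
    assert (H3 : 8*al*(a*a) <= s*s/8).
    { assert (8*a*(1+al) <= s) by (assert (0<= al*(b*b)) by nra; nra).
      assert (64*al*(a*a) <= (8*a*(1+al))*(8*a*(1+al))) by nra.
      assert (0 <= 8*a*(1+al)) by nra. nra. }
    assert (0 <= (1 + al) * b * w * ((1 + al) * b * w)) by nra.
    nra. }
  assert (HT : ns (Cmul (tw a b al w) (tw a b al w)) <> 0).
  { rewrite ns_mul. pose proof (ns_tw_pos a b al w Ha Hb Hal). nra. }
  assert (HnsD : ns (Dw a b al w) = 16*(al*al)*((a*a + b*b*s)*(a*a+b*b*s))).
  { unfold Dw. rewrite !ns_mul, ns_RtoC, ns_p1, ns_p2. unfold s. ring. }
  set (E := Cdiv (Dw a b al w) (Cmul (tw a b al w) (tw a b al w))).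
  assert (HE : ns E <= 1/4).
  { unfold E, Cdiv. rewrite ns_mul, ns_inv, ns_mul, HnsD; auto.
    rewrite ns_mul in HT.
    set (N := ns (tw a b al w)) in *.
    assert (0 <= al*(a*a+b*b*s)) by (assert (0 <= b*b*s) by (unfold s; nra); nra).
    assert (64*(al*al)*((a*a + b*b*s)*(a*a+b*b*s)) <= N*N) by nra.
    assert (0 < N*N) by (pose proof (ns_ge0 (tw a b al w)); fold N in H1; nra).
    apply (Rmult_le_reg_r (N*N)); auto. rewrite Rmult_assoc, Rinv_l; lra. }
  unfold Gf. fold (zw a b al w). change (zw a b al w) with (Csub (RtoC 1) E).
  destruct (Cnorm_ge (Csub (RtoC 1) E)) as [Hn0 Hn2].
  set (n := Cnorm (Csub (RtoC 1) E)) in *.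
  change (Re (Csub (RtoC 1) E)) with (1 - Re E) in *.
  change (Im (Csub (RtoC 1) E)) with (0 - Im E) in *.
  unfold ns in HE.
  assert (Hr : Re E <= 1/2) by nra.
  assert (-(1/2) <= Re E) by nra. assert (n*n <= 4) by nra. assert (Hn : n <= 2) by nra.
  assert (HA : 0 <= (n + (1 - Re E))/2) by nra.
  assert (HX := sqrt_sqrt _ HA). assert (HX0 := sqrt_pos ((n + (1 - Re E))/2)).
  set (X := sqrt ((n + (1 - Re E))/2)) in *.
  assert (1/2 <= X) by nra.
  apply (Rmult_le_reg_r (1+n)). lra.
  replace (2 * X / (1 + n) * (1 + n)) with (2*X) by (field; lra). lra.
Qed.

Theorem lemma2 (a1 b1 alpha : R) :
  0 < a1 -> 0 < b1 -> 0 < alpha -> alpha <> 1 ->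
  exists M : R, M < 1 /\
    forall w : R, 0 <= w ->
      Cnorm (Cmul (C_1 a1 b1 (alpha * a1)%R (alpha * b1)%R (Cmul Cj (RtoC w)))
                  (C_2 a1 b1 (alpha * a1)%R (alpha * b1)%R (Cmul Cj (RtoC w)))) <= M.
Proof.
  intros Ha Hb Hal H1.
  set (Om := 2*(1+alpha)*a1 + 64*alpha*(b1*b1) + 8*a1*(1+alpha) + 1).
  assert (HOm : 0 <= Om) by (unfold Om; assert (0 <= alpha*(b1*b1)) by nra; nra).
  destruct (continuity_ab_min (Gf a1 b1 alpha) 0 Om HOm
             (fun c _ => Gf_cont a1 b1 alpha c Ha Hb Hal)) as [mx [Hmx Hmxr]].
  assert (Gpos : forall w, 0 <= w -> 0 < Gf a1 b1 alpha w).
  { intros w Hw. pose proof (pos_pt a1 b1 alpha w Ha Hb Hal H1 Hw).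
    destruct (Cnorm_ge (zw a1 b1 alpha w)). unfold Gf.
    apply Rdiv_lt_0_compat; [|lra]. apply Rmult_lt_0_compat; [lra|].
    apply sqrt_lt_R0. lra. }
  assert (Gm := Gpos mx (proj1 Hmxr)).
  set (d := Rmin (1/3) (Gf a1 b1 alpha mx)).
  assert (Hd : 0 < d <= 1/3).
  { unfold d; split. apply Rmin_glb_lt; lra. apply Rmin_l. }
  assert (Hdw : forall w, 0 <= w -> d <= Gf a1 b1 alpha w).
  { intros w Hw. destruct (Rle_or_lt w Om).
    - apply Rle_trans with (Gf a1 b1 alpha mx). apply Rmin_r. apply Hmx; lra.
    - apply Rle_trans with (1/3). apply Rmin_l. apply large; auto; unfold Om in *; lra. }
  exists (sqrt ((1-d)/(1+d))). split.
  { apply Rlt_le_trans with (sqrt 1); [|rewrite sqrt_1; lra]. apply sqrt_lt_1_alt. split.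
    - unfold Rdiv; apply Rmult_le_pos; [lra| left; apply Rinv_0_lt_compat; lra].
    - apply (Rmult_lt_reg_r (1+d)). lra. unfold Rdiv. rewrite Rmult_assoc, Rinv_l; lra. }
  intros w Hw.
  assert (Hb2 : d * (1 + Cnorm (zw a1 b1 alpha w)) <= 2 * Re (Csqrt (zw a1 b1 alpha w))).
  { pose proof (Hdw w Hw). unfold Gf in H.
    destruct (Cnorm_ge (zw a1 b1 alpha w)).
    change (Re (Csqrt (zw a1 b1 alpha w))) with (sqrt ((Cnorm (zw a1 b1 alpha w) + Re (zw a1 b1 alpha w))/2)).
    set (n := Cnorm (zw a1 b1 alpha w)) in *.
    set (X := sqrt ((n + Re (zw a1 b1 alpha w)) / 2)) in *.
    apply (Rmult_le_compat_r (1+n)) in H; [|lra].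
    replace (2 * X / (1 + n) * (1 + n)) with (2*X) in H by (field; lra). lra. }
  rewrite Cnorm_ns. unfold C_1, C_2, mfun. cbv zeta.
  rewrite gen.
  - exact (ratio_bound (zw a1 b1 alpha w) d Hd Hb2).
  - pose proof (ns_tw_pos a1 b1 alpha w Ha Hb Hal). unfold tw, sw in H. lra.
  - pose proof (ns_p1 a1 b1 w). unfold sw in H. rewrite H. assert (0 <= b1*b1*w*w) by nra. nra.
  - pose proof (ns_p2 a1 b1 alpha w). unfold sw in H. rewrite H. assert (0 <= b1*b1*w*w) by nra.
    assert (0 < alpha*alpha) by nra. apply Rgt_not_eq. apply Rmult_lt_0_compat; nra.
Qed.
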